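(* Let $d\ge2$, $q\ge2$, let $p\in\mathbb{Z}/q\mathbb{Z}$ with $\gcd(p,q)=1$ (take the representative $1\le p\le q-1$), and let $p^*$ be the inverse of $p$ in $\mathbb{Z}/q\mathbb{Z}$. Let $t=(a_0,a_1,\dots,a_{q-1})\in\mathbb{T}$ (in $q$-tuple notation) have $\sigma_d$-orbit $\mathcal{O}$ of size $q$. Then $t$ is the least element of $\mathcal{O}$ and $\mathcal{O}$ is $\sigma_d$-rotational with rotation number $p/q$ if and only if $$a_0\le a_{p^*}\le a_{2p^*}\le\dots\le a_{-(p+1)p^*}<a_{-pp^*}\le\dots\le a_{(q-1)p^*},$$ i.e. $a_{kp^*}\le a_{(k+1)p^*}$ for all $0\le k\le q-2$, with strict inequality for $k=q-p-1$.
   Context: $\mathbb{T}=\mathbb{R}/\mathbb{Z}$, totally ordered by representatives in $[0,1)$; $\sigma_d(t)=dt$. An orbit $\mathcal{O}=\{t_0<\dots<t_{q-1}\}$ (indices in $\mathbb{Z}/q\mathbb{Z}$) is $\sigma_d$-rotational with rotation number $p/q$ if $\sigma_d(t_i)=t_{i+p}$ for all $i$. $q$-tuple notation: $(a_0,\dots,a_{q-1})$ with $a_i\in\{0,\dots,d-1\}$ denotes the point with base-$d$ expansion $0.\overline{a_0a_1\dots a_{q-1}}$; digit indices are read in $\mathbb{Z}/q\mathbb{Z}$. *)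

(* Defs.v *)
(* Points of T = R/Z are represented by their representatives
   in [0,1); since all points considered are periodic, they are rational. *)
From mathcomp Require Import all_boot all_order all_algebra.
Set Implicit Arguments. Unset Strict Implicit. Unset Printing Implicit Defensive.
Import Order.TTheory GRing.Theory Num.Theory.
Local Open Scope ring_scope.

Definition frac (x : rat) : rat := x - (Num.floor x)%:~R.

Definition sigma (d : nat) (x : rat) : rat := frac (d%:R * x).

(* the point (a_0,...,a_{q-1}) = 0.(a_0 ... a_{q-1}) repeated, base d, in T *)
Definition qtuple_pt (d q : nat) (a : nat -> nat) : rat :=
  frac ((\sum_(i < q) (a i * d ^ (q - 1 - i))%N%:R) / (d ^ q - 1)%N%:R).

Definition orbit_seq (d n : nat) (x : rat) : seq rat :=
  [seq iter j (sigma d) x | j <- iota 0 n].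

Definition orbit_size (d : nat) (x : rat) (q : nat) : Prop :=
  uniq (orbit_seq d q x) /\ iter q (sigma d) x = x.

Definition sorted_orbit (d q : nat) (x : rat) : seq rat :=
  sort <=%R (orbit_seq d q x).

Definition rotational (d q p : nat) (x : rat) : Prop :=
  forall i : nat, (i < q)%N ->
    sigma d (nth 0 (sorted_orbit d q x) i) = nth 0 (sorted_orbit d q x) ((i + p) %% q).

Definition least_in_orbit (d q : nat) (x : rat) : Prop :=
  forall y, y \in orbit_seq d q x -> x <= y.

(* Main.v *)
Require Import Defs.
From mathcomp Require Import all_boot all_order all_algebra zify.
Import Order.TTheory GRing.Theory Num.Theory.

Definition V (d q : nat) (a : nat -> nat) (j : nat) : nat :=
  (\sum_(i < q) a ((i + j) %% q) * d ^ (q - 1 - i))%N.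

Lemma V_step d q a j : (0 < q)%N ->
  (d * V d q a j + a (j %% q) = a (j %% q) * d ^ q + V d q a j.+1)%N.
Proof.
case: q => [//|n] _; rewrite /V.
rewrite big_ord_recl big_ord_recr /=.
have -> : ((n + j.+1) %% n.+1 = j %% n.+1)%N.
  by rewrite addnS -addSn -modnDml modnn add0n.
have -> : (n.+1 - 1 - n = 0)%N by lia.
have -> : (n.+1 - 1 = n)%N by lia.
rewrite expn0 muln1 mulnDr big_distrr /= -addnA.
rewrite mulnCA -expnS; congr (_ + _)%N; first by rewrite add0n subn0.
congr (_ + _)%N; apply: eq_bigr => i _; rewrite /bump /= add1n addnS addSn.
have -> : (n - i = (n - i.+1).+1)%N by have := ltn_ord i; lia.
by rewrite expnS mulnCA.
Qed.

Lemma digits_lt d n (b : nat -> nat) : (forall i, (i < n)%N -> (b i < d)%N) ->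
  (\sum_(i < n) b i * d ^ (n - 1 - i) < d ^ n)%N.
Proof.
elim: n b => [|n IH] b Hb; first by rewrite big_ord0 expn0.
rewrite big_ord_recl /= subn0.
have H1 := IH (fun i => b i.+1) (fun i Hi => Hb i.+1 Hi).
have -> : (\sum_(i < n) b (bump 0 i) * d ^ (n.+1 - 1 - bump 0 i) =
   \sum_(i < n) b i.+1 * d ^ (n - 1 - i))%N.
  by apply: eq_bigr => i _; rewrite /bump /= add1n; congr (_ * d ^ _)%N; lia.
have H0 := Hb 0%N isT.
rewrite expnS subn1 /=.
apply: (leq_trans (n := (b 0%N * d ^ n + d ^ n)%N)); first by rewrite ltn_add2l.
by rewrite -[X in (_ + X)%N]mul1n -mulnDl addn1 leq_mul2r H0 orbT.
Qed.


Lemma frac_small (n : nat) (y : rat) : (0 <= y < 1)%R -> Defs.frac (n%:R + y)%R = y.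
Proof.
move=> /andP[y0 y1]; rewrite /Defs.frac.
have -> : Num.floor (n%:R + y)%R = (n%:Z)%R.
  apply: floor_def; rewrite -pmulrn intrD -pmulrn lerDl y0 /= ltrD2l.
  by rewrite y1.
by rewrite -pmulrn addrC addKr.
Qed.

Lemma V_lt d q a j : (0 < q)%N -> (forall i, (i < q)%N -> (a i < d)%N) ->
  (V d q a j < d ^ q)%N.
Proof.
move=> q0 Ha; rewrite /V.
apply: (@digits_lt d q (fun i => a ((i + j) %% q)%N)) => i _.
by apply: Ha; rewrite ltn_mod.
Qed.

Lemma V_mod d q a j : V d q a j = V d q a (j %% q).
Proof. by rewrite /V; apply: eq_bigr => i _; rewrite modnDmr. Qed.

Lemma V_D_step d q a j : (0 < q)%N -> (forall i, (i < q)%N -> (a i < d)%N) ->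
  V d q a j = (d ^ q - 1)%N -> V d q a j.+1 = (d ^ q - 1)%N.
Proof.
move=> q0 Ha HV.
have E := V_step d q a j q0.
have H1 := V_lt d q a j.+1 q0 Ha.
have H2 : (a (j %% q) < d)%N by apply: Ha; rewrite ltn_mod.
have H3 : (0 < d ^ q)%N by rewrite expn_gt0 (leq_ltn_trans (leq0n _) H2).
clear Ha; move: E H1 H2 H3; rewrite HV.
set D := (d ^ q)%N; set b := a (j %% q); set W := V d q a j.+1.
move=> E H1 H2 H3; nia.
Qed.

Section Orb.
Variables (d q : nat) (a : nat -> nat).
Hypothesis d2 : (2 <= d)%N.
Hypothesis q2 : (2 <= q)%N.
Hypothesis Ha : forall i, (i < q)%N -> (a i < d)%N.
Hypothesis Horb : orbit_size d (qtuple_pt d q a) q.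

Let x := qtuple_pt d q a.
Definition X j := iter j (sigma d) x.
Let D := (d ^ q - 1)%N.

Lemma q0 : (0 < q)%N. Proof. by apply: leq_trans q2. Qed.

Lemma X_inj i j : (i < q)%N -> (j < q)%N -> X i = X j -> i = j.
Proof.
move=> iq jq E; case: Horb => U _.
have Hs : size (orbit_seq d q x) = q by rewrite /orbit_seq size_map size_iota.
have Hn k : (k < q)%N -> nth 0%R (orbit_seq d q x) k = X k.
  by move=> kq; rewrite /orbit_seq (nth_map 0%N) ?size_iota // nth_iota.
apply/eqP; rewrite -(nth_uniq 0%R (s := orbit_seq d q x)) ?Hs //.
by rewrite !Hn // E.
Qed.

Lemma X_q : X q = x. Proof. by case: Horb. Qed.

Lemma X_mulq m : iter (m * q) (sigma d) x = x.
Proof.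
elim: m => [//|m IH]; by rewrite mulSn iterD IH; exact: X_q.
Qed.

Lemma X_mod j : X j = X (j %% q).
Proof.
rewrite {1}(divn_eq j q) addnC /X iterD X_mulq //.
Qed.

Lemma x_eq : x = Defs.frac ((V d q a 0)%:R / D%:R)%R.
Proof.
rewrite /x /qtuple_pt /V natr_sum; congr (Defs.frac (_ / _))%R.
by apply: eq_bigr => i _; rewrite addn0 modn_small.
Qed.

Lemma V_neD j : V d q a j <> D.
Proof.
move=> HV.
have Hm m : V d q a (j + m) = D.
  elim: m => [|m IH]; first by rewrite addn0.
  by rewrite addnS; apply: V_D_step => //; exact: q0.
have HV0 : V d q a 0 = D.
  rewrite -(Hm (q - j %% q)) [RHS]V_mod -modnDml subnKC ?modnn //.
  by rewrite ltnW // ltn_mod q0.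
have x0 : x = 0%R.
  rewrite x_eq HV0 divff /Defs.frac ?floor1 ?subrr //.
  rewrite pnatr_eq0 /D; move: d2; case: d => [//|[//|d']] _.
  rewrite subn_eq0 -ltnNge; have := @ltn_expl d'.+2 q isT; lia.
have : X 0 = X 1.
  rewrite /X /= x0 /sigma mulr0 /Defs.frac floor0 subr0 //.
by move/X_inj => /(_ q0 q2).
Qed.

Lemma D_pos : (0 < D)%N.
Proof. rewrite /D subn_gt0; have := @ltn_expl d q d2; lia. Qed.

Lemma V_ltD j : (V d q a j < D)%N.
Proof.
have := V_lt d q a j q0 Ha; have := V_neD j; rewrite /D; lia.
Qed.

Lemma V_bnd j : (0 <= ((V d q a j)%:R / D%:R : rat) < 1)%R.
Proof.
have Dp : ((0:rat) < D%:R)%R by rewrite ltr0n D_pos.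
by rewrite divr_ge0 ?ler0n ?ltW //= ltr_pdivrMr // mul1r ltr_nat V_ltD.
Qed.

Lemma V_rat j : ((d%:R * ((V d q a j)%:R / D%:R)) =
   (a (j %% q))%:R + (V d q a j.+1)%:R / D%:R :> rat)%R.
Proof.
have E := V_step d q a j q0.
have E2 : (d * V d q a j = a (j %% q) * D + V d q a j.+1)%N.
  have : (d ^ q = D.+1)%N by have := D_pos; rewrite /D; lia.
  move=> HD; rewrite HD mulnS in E; lia.
have Dn : (D%:R != 0 :> rat)%R by rewrite pnatr_eq0 -lt0n D_pos.
rewrite mulrA -natrM E2 natrD natrM mulrDl mulfK //.
Qed.

Lemma X_val j : X j = ((V d q a j)%:R / D%:R)%R.
Proof.
elim: j => [|j IH].
  have := @frac_small 0 _ (V_bnd 0%N); rewrite add0r => <-.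
  exact: x_eq.
rewrite /X iterS -/(X j) IH /sigma V_rat frac_small //; exact: V_bnd.
Qed.

Lemma X_rel j : (d%:R * X j = (a (j %% q))%:R + X j.+1 :> rat)%R.
Proof. by rewrite !X_val V_rat. Qed.

Lemma X_bnd j : (0 <= X j < 1)%R.
Proof. rewrite X_val; exact: V_bnd. Qed.
End Orb.

Lemma sorted_map_iota (T : Type) (r : rel T) (f : nat -> T) m n :
  (forall k, (m <= k)%N -> (k.+1 < m + n)%N -> r (f k) (f k.+1)) ->
  sorted r (map f (iota m n)).
Proof.
elim: n m => [//|n IH] m H /=.
case: n IH H => [//|n] IH H /=.
apply/andP; split; first by apply: H => //; lia.
have := IH m.+1 (fun k h1 h2 => H k (ltnW h1) ltac:(lia)); done.
Qed.

Section Comb.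
Variables (d q p pstar : nat) (a : nat -> nat).
Hypothesis d2 : (2 <= d)%N.
Hypothesis q2 : (2 <= q)%N.
Hypothesis p1 : (1 <= p)%N.
Hypothesis pq : (p <= q - 1)%N.
Hypothesis Hpp : ((p * pstar) %% q = 1)%N.
Hypothesis Ha : forall i, (i < q)%N -> (a i < d)%N.
Hypothesis Horb : orbit_size d (qtuple_pt d q a) q.

Let Y := X d q a.
Let c j := a (j %% q).
Let Xrel := X_rel d q a d2 q2 Ha Horb.
Let Xmod := X_mod d q a Horb.

Lemma dpos : ((0:rat) < d%:R)%R.
Proof. by rewrite ltr0n; apply: leq_trans d2. Qed.

Lemma L1 u v : (c u < c v)%N -> (Y u < Y v)%R.
Proof.
move=> H; rewrite -(ltr_pM2l dpos) !Xrel.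
have /andP[_ h1] := X_bnd d q a d2 q2 Ha Horb u.+1.
have /andP[h2 _] := X_bnd d q a d2 q2 Ha Horb v.+1.
apply: (lt_le_trans (y := (c u)%:R + 1)%R); first by rewrite ltrD2l.
apply: (le_trans (y := (c v)%:R)%R); last by rewrite lerDl.
by rewrite -(natrD _ (c u) 1) ler_nat addn1.
Qed.

Lemma L2 u v : c u = c v -> (Y u < Y v)%R = (Y u.+1 < Y v.+1)%R.
Proof.
move=> H; rewrite -(ltr_pM2l dpos) !Xrel.
by rewrite /c in H; rewrite H ltrD2l.
Qed.

Lemma L3 u v : (Y u < Y v)%R -> (c u <= c v)%N.
Proof.
move=> H; rewrite leqNgt; apply/negP => /L1 H'.
by move: (lt_trans H H'); rewrite ltxx.
Qed.

Lemma Minv j : ((j * pstar) %% q * p %% q = j %% q)%N.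
Proof.
by rewrite modnMml -mulnA [(pstar * p)%N]mulnC -modnMmr Hpp muln1.
Qed.

Lemma Ycong n m : (n %% q = m %% q)%N -> Y (n * pstar) = Y (m * pstar).
Proof.
move=> H; rewrite /Y Xmod [RHS]Xmod.
by rewrite -modnMml H modnMml.
Qed.

Lemma Yshift m : Y ((m + p) * pstar) = Y (m * pstar).+1.
Proof.
rewrite /Y Xmod [RHS]Xmod mulnDl -modnDmr Hpp.
by rewrite addn1.
Qed.


Let x := qtuple_pt d q a.
Let O := orbit_seq d q x.
Let S := sorted_orbit d q x.

Lemma O_eq : O = map Y (iota 0 q). Proof. by []. Qed.
Lemma Ysig j : sigma d (Y j) = Y j.+1. Proof. by rewrite /Y /X iterS. Qed.
Lemma Y0 : Y 0 = x. Proof. by []. Qed.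

Lemma q0' : (0 < q)%N. Proof. exact: leq_trans q2. Qed.

Lemma S_mem : S =i O. Proof. by apply: perm_mem; rewrite /S /sorted_orbit perm_sort perm_refl. Qed.
Lemma S_size : size S = q.
Proof. by rewrite /S /sorted_orbit size_sort /orbit_seq size_map size_iota. Qed.
Lemma S_lt : sorted <%R S.
Proof.
have Hp : perm_eq S O by rewrite /S /sorted_orbit perm_sort perm_refl.
rewrite lt_sorted_uniq_le (perm_uniq Hp) sort_le_sorted andbT.
by case: Horb.
Qed.
Lemma S_nth_lt i j : (i < j)%N -> (j < q)%N -> (nth 0%R S i < nth 0%R S j)%R.
Proof.
move=> ij jq; apply: (sorted_ltn_nth lt_trans) => //; first exact: S_lt.
  by rewrite inE S_size (ltn_trans ij).
by rewrite inE S_size.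
Qed.

Lemma fwd : least_in_orbit d q x -> rotational d q p x ->
   (forall k, (k <= q - 2)%N ->
      (a ((k * pstar) %% q) <= a ((k.+1 * pstar) %% q))%N) /\
   (a (((q - p - 1) * pstar) %% q) < a (((q - p) * pstar) %% q))%N.
Proof.
move=> Hl Hr.
have xO : x \in O by rewrite O_eq; apply: (map_f Y (x := 0%N)); rewrite mem_iota q0'.
have S0 : nth 0%R S 0 = x.
  have xS : x \in S by rewrite S_mem.
  have iq : (index x S < q)%N by rewrite -S_size index_mem.
  case: (posnP (index x S)) => hi; first by rewrite -[RHS](nth_index 0%R xS) hi.
  have := S_nth_lt _ _ hi iq; rewrite nth_index //.
  have := Hl (nth 0%R S 0); rewrite -S_mem mem_nth ?S_size ?q0' // => /(_ isT).
  by move=> h1 h2; move: (le_lt_trans h1 h2); rewrite ltxx.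
have Yp j : Y j = nth 0%R S ((j * p) %% q).
  elim: j => [|j IH]; first by rewrite mul0n mod0n S0.
  rewrite -Ysig IH Hr ?ltn_mod ?q0' // modnDml mulSn addnC //.
have Sk k : (k < q)%N -> nth 0%R S k = Y ((k * pstar) %% q).
  by move=> kq; rewrite Yp Minv modn_small.
have cm j : c (j %% q) = a (j %% q) by rewrite /c modn_mod.
have part1 k : (k <= q - 2)%N -> (a ((k * pstar) %% q) <= a ((k.+1 * pstar) %% q))%N.
  move=> kq; rewrite -!cm; apply: L3; rewrite -!Sk; try lia.
  apply: S_nth_lt => //; lia.
split => //.
have E : (q - p = (q - p - 1).+1)%N by lia.
rewrite ltn_neqAle; apply/andP; split; last by have := part1 (q - p - 1) ltac:(lia); rewrite -E.
apply/negP => /eqP He.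
have : (Y ((q - p - 1) * pstar %% q) < Y ((q - p) * pstar %% q))%R.
  rewrite -!Sk; try lia; apply: S_nth_lt; lia.
rewrite L2; last by rewrite !cm.
rewrite -!Ysig -!Sk; try lia.
rewrite !Hr; try lia.
have -> : ((q - p - 1 + p) %% q = q - 1)%N by rewrite modn_small; lia.
have -> : ((q - p + p) %% q = 0)%N by rewrite subnK ?modnn //; lia.
move=> h; have := S_nth_lt 0 (q - 1) ltac:(lia) ltac:(lia).
by move: h => /lt_trans h /h; rewrite ltxx.
Qed.


Lemma bwd :
   (forall k, (k <= q - 2)%N ->
      (a ((k * pstar) %% q) <= a ((k.+1 * pstar) %% q))%N) ->
   (a (((q - p - 1) * pstar) %% q) < a (((q - p) * pstar) %% q))%N ->
   least_in_orbit d q x /\ rotational d q p x.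
Proof.
move=> H1 H2.
pose s k := Y (k * pstar).
pose bad k := (k <= q - 2)%N && (s k.+1 < s k)%R.
have cE k : c (k * pstar) = a ((k * pstar) %% q) by [].
have Ne k : (k <= q - 2)%N -> s k != s k.+1.
  move=> kq; apply/eqP; rewrite /s /Y Xmod [X in _ = X]Xmod => /X_inj.
  rewrite !ltn_mod q0' => /(_ Horb isT isT) h.
  have := Minv k; rewrite h Minv !modn_small //; lia.
have bad_ne k : bad k -> k != (q - p - 1)%N.
  move=> /andP[kq hb]; apply/eqP => ek.
  have : (c (k * pstar) < c (k.+1 * pstar))%N.
    by rewrite !cE ek; have -> : ((q - p - 1).+1 = q - p)%N by lia.
  move/L1; rewrite -/(s k) -/(s k.+1) => h.
  by move: (lt_trans h hb); rewrite ltxx.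
have bad_step k : bad k -> bad ((k + p) %% q).
  move=> bk; have kne := bad_ne k bk; move: bk => /andP[kq hb].
  have ceq : c (k.+1 * pstar) = c (k * pstar).
    apply/eqP; rewrite eqn_leq; apply/andP; split; last by rewrite !cE H1.
    rewrite leqNgt; apply/negP => /L1; rewrite -/(s k) -/(s k.+1) => h.
    by move: (lt_trans h hb); rewrite ltxx.
  have hb' := hb; rewrite /s L2 // in hb'.
  apply/andP; split.
    case: (ltnP (k + p) q) => h.
      rewrite modn_small //; move/eqP: kne; lia.
    rewrite -(subnK h) modnDr modn_small; lia.
  rewrite /s (Ycong (((k + p) %% q).+1) (k.+1 + p)); last first.
    by rewrite -addn1 modnDml; congr (_ %% _)%N; lia.
  rewrite (Ycong ((k + p) %% q) (k + p)) ?modn_mod //.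
  by rewrite !Yshift.
have bad_iter k m : bad k -> bad ((k + m * p) %% q).
  move=> bk; elim: m => [|m IH].
    rewrite mul0n addn0 modn_small //; move: bk => /andP[kq _]; lia.
  have := bad_step _ IH; rewrite modnDml mulSn.
  by rewrite [(p + _)%N]addnC addnA.
have nobad k : ~~ bad k.
  apply/negP => bk; have kq : (k <= q - 2)%N by case/andP: bk.
  pose W := ((q - p - 1) + (q - k))%N.
  have := bad_iter k (W * pstar) bk.
  have -> : ((k + W * pstar * p) %% q = q - p - 1)%N.
    rewrite -modnDmr -modnMml Minv modnDmr.
    have -> : (k + W = q + (q - p - 1))%N by rewrite /W; lia.
    rewrite modnDl modn_small //; lia.
  by move/bad_ne; rewrite eqxx.
have lt_s k : (k <= q - 2)%N -> (s k < s k.+1)%R.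
  move=> kq; have := nobad k; rewrite /bad kq /= -leNgt.
  by rewrite le_eqVlt (negbTE (Ne k kq)).
pose L := map s (iota 0 q).
have Lsort : sorted <%R L.
  apply: sorted_map_iota => k _ h; apply: lt_s; lia.
have Lsub : {subset L <= O}.
  move=> y /mapP[k]; rewrite mem_iota add0n => /andP[_ kq] ->.
  rewrite O_eq /s /Y Xmod; apply: map_f; rewrite mem_iota add0n ltn_mod q0'.
  by [].
have Lmem : L =i O.
  have Lu : uniq L by move: Lsort; rewrite lt_sorted_uniq_le => /andP[].
  have Ls : (size O <= size L)%N by rewrite O_eq !size_map !size_iota.
  by have [_ ] := uniq_min_size Lu Lsub Ls.
have SL : S = L.
  apply: lt_sorted_eq; [exact: S_lt | exact: Lsort |] => y.
  by rewrite S_mem Lmem.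
have nthL k : (k < q)%N -> nth 0%R S k = s k.
  by move=> kq; rewrite SL /L (nth_map 0%N) ?size_iota // nth_iota.
split.
  move=> y; rewrite -Lmem => /mapP[k]; rewrite mem_iota add0n => /andP[_ kq] ->.
  have -> : x = s 0 by rewrite /s mul0n.
  case: (posnP k) => [->//|k0].
  rewrite -!nthL ?q0' //; apply: ltW; apply: S_nth_lt => //.
move=> i iq; rewrite !nthL ?ltn_mod ?q0' //.
rewrite /s Ysig (Ycong ((i + p) %% q) (i + p)) ?modn_mod //.
by rewrite Yshift.
Qed.

End Comb.

Local Open Scope ring_scope.

Theorem corollary3p2 (d q p pstar : nat) (a : nat -> nat) :
  (2 <= d)%N -> (2 <= q)%N ->
  (1 <= p)%N -> (p <= q - 1)%N -> coprime p q ->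
  ((p * pstar) %% q = 1)%N ->
  (forall i, (i < q)%N -> (a i < d)%N) ->
  orbit_size d (qtuple_pt d q a) q ->
  (least_in_orbit d q (qtuple_pt d q a) /\ rotational d q p (qtuple_pt d q a)
   <->
   (forall k, (k <= q - 2)%N ->
      (a ((k * pstar) %% q) <= a ((k.+1 * pstar) %% q))%N) /\
   (a (((q - p - 1) * pstar) %% q) < a (((q - p) * pstar) %% q))%N).
Proof.
move=> d2 q2 p1 pq _ Hpp Ha Horb; split.
  by case=> Hl Hr; apply: (fwd d q p pstar a d2 q2 p1 pq Hpp Ha Horb).
by case=> H1 H2; apply: (bwd d q p pstar a d2 q2 p1 pq Hpp Ha Horb).
Qed.
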